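(* Let $b\in\mathbb{N}_{>0}$, $\mathbf{x}=(x_1,\dots,x_b)\in\{0,1\}^b$ and $\gamma_{\mathbf{x}}=\sum_{k=1}^{b}\frac{x_k}{4^k}$. Then $\gamma_{\mathbf{x}}\in[0,\tfrac13]$, and for every integer $j>0$: if $j>b$ then $\sin\!\big(4^j\tfrac{\pi}{2}\gamma_{\mathbf{x}}\big)=0$; if $j\leq b$ and $x_j=1$ then $\sin\!\big(4^j\tfrac{\pi}{2}\gamma_{\mathbf{x}}\big)\geq\tfrac23$; and if $j\leq b$ and $x_j=0$ then $\sin\!\big(4^j\tfrac{\pi}{2}\gamma_{\mathbf{x}}\big)\leq\tfrac12$. *)

(* Defs.v *)
From Stdlib Require Import Reals.
Open Scope R_scope.

(* x : nat -> bool encodes (x_1,...,x_b) in {0,1}^b; only indices 1..b are used. *)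
Definition bit (c : bool) : R := if c then 1 else 0.

Fixpoint gamma (b : nat) (x : nat -> bool) : R :=
  match b with
  | O => 0
  | S b' => gamma b' x + bit (x b) / 4 ^ b
  end.

(* Main.v *)
Require Import Defs.
From Stdlib Require Import Reals Lra Lia Arith.
Open Scope R_scope.

Lemma pow4_pos n : 0 < 4 ^ n.
Proof. apply pow_lt; lra. Qed.

Lemma inv4S m : / 4 ^ m = 4 * / 4 ^ (S m).
Proof. simpl. pose proof (pow4_pos m). field. lra. Qed.

Lemma gamma_S b x : gamma (S b) x = gamma b x + bit (x (S b)) / 4 ^ S b.
Proof. reflexivity. Qed.

Lemma gamma_bound b x : 0 <= gamma b x <= (1 - / 4 ^ b) / 3.
Proof.
  induction b as [|b IH]; [simpl gamma|rewrite gamma_S].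
  - simpl. rewrite Rinv_1. lra.
  - pose proof (inv4S b) as E. pose proof (pow4_pos (S b)).
    set (u := / 4 ^ S b) in *.
    assert (0 < u) by (apply Rinv_0_lt_compat; lra).
    replace (bit (x (S b)) / 4 ^ S b) with (bit (x (S b)) * u) by (unfold u, Rdiv; ring).
    destruct (x (S b)); simpl bit; lra.
Qed.

Lemma key j x b : (0 < j)%nat -> exists (N : nat) (t : R),
  4 ^ j * gamma b x = 4 * INR N + (if (j <=? b)%nat then bit (x j) else 0) + t
  /\ 0 <= t <= (1 - / 4 ^ (b - j)) / 3.
Proof.
  intros Hj. induction b as [|b IH].
  - exists 0%nat, 0. replace (j <=? 0)%nat with false by (symmetry; apply Nat.leb_gt; lia).
    replace (0 - j)%nat with 0%nat by lia. simpl. rewrite Rinv_1. lra.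
  - destruct IH as [N [t [Heq Ht]]].
    rewrite gamma_S, Rmult_plus_distr_l, Heq.
    destruct (lt_eq_lt_dec (S b) j) as [[Hlt|Heqj]|Hgt].
    + set (k := (j - S b - 1)%nat).
      assert (Hjk : j = (k + 1 + S b)%nat) by (unfold k; lia).
      replace (j <=? b)%nat with false in * by (symmetry; apply Nat.leb_gt; lia).
      replace (j <=? S b)%nat with false by (symmetry; apply Nat.leb_gt; lia).
      replace (b - j)%nat with 0%nat in * by lia.
      replace (S b - j)%nat with 0%nat by lia.
      exists (N + (if x (S b) then 4 ^ k else 0))%nat, t.
      split; [|exact Ht].
      rewrite plus_INR. rewrite Hjk, !pow_add.
      pose proof (pow4_pos (S b)).
      destruct (x (S b)); simpl bit.
      * rewrite pow_INR. replace (INR 4) with 4 by (simpl; ring).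
        set (P := 4 ^ S b) in *. simpl (4 ^ 1). field. lra.
      * simpl INR. set (P := 4 ^ S b) in *. field. lra.
    + subst j.
      replace (S b <=? b)%nat with false in * by (symmetry; apply Nat.leb_gt; lia).
      rewrite Nat.leb_refl.
      replace (b - S b)%nat with 0%nat in * by lia.
      rewrite Nat.sub_diag.
      exists N, t. split; [|exact Ht].
      pose proof (pow4_pos (S b)). field_simplify; [lra|lra].
    + replace (j <=? b)%nat with true in * by (symmetry; apply Nat.leb_le; lia).
      replace (j <=? S b)%nat with true by (symmetry; apply Nat.leb_le; lia).
      set (m := (b - j)%nat) in *.
      replace (S b - j)%nat with (S m) by (unfold m; lia).
      assert (Hb : S b = (j + S m)%nat) by (unfold m; lia).
      pose proof (inv4S m) as E. pose proof (pow4_pos (S m)). pose proof (pow4_pos j).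
      set (u := / 4 ^ S m) in *.
      assert (0 < u) by (apply Rinv_0_lt_compat; lra).
      exists N, (t + bit (x (S b)) * u).
      assert (Hterm : 4 ^ j * (bit (x (S b)) / 4 ^ S b) = bit (x (S b)) * u).
      { rewrite Hb, pow_add. unfold u. field. split; lra. }
      rewrite Hterm. split; [lra|].
      destruct (x (S b)); simpl bit; lra.
Qed.

Theorem lemma1 (b : nat) (x : nat -> bool) (hb : (0 < b)%nat) :
  0 <= gamma b x <= 1 / 3 /\
  (forall j : nat, (0 < j)%nat ->
     ((b < j)%nat -> sin (4 ^ j * (PI / 2) * gamma b x) = 0) /\
     ((j <= b)%nat -> x j = true -> sin (4 ^ j * (PI / 2) * gamma b x) >= 2 / 3) /\
     ((j <= b)%nat -> x j = false -> sin (4 ^ j * (PI / 2) * gamma b x) <= 1 / 2)).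
Proof.
  split.
  { pose proof (gamma_bound b x). pose proof (pow4_pos b).
    assert (0 < / 4 ^ b) by (apply Rinv_0_lt_compat; lra). lra. }
  intros j Hj.
  destruct (key j x b Hj) as [N [t [Heq Ht]]].
  assert (Hs : 4 ^ j * (PI / 2) * gamma b x
               = ((if (j <=? b)%nat then bit (x j) else 0) + t) * (PI / 2) + 2 * INR N * PI).
  { replace (4 ^ j * (PI / 2) * gamma b x) with ((4 ^ j * gamma b x) * (PI / 2)) by ring.
    rewrite Heq. set (c := if (j <=? b)%nat then bit (x j) else 0). field. }
  rewrite Hs, sin_period.
  assert (Ht3 : 0 <= t <= 1 / 3).
  { pose proof (pow4_pos (b - j)).
    assert (0 < / 4 ^ (b - j)) by (apply Rinv_0_lt_compat; lra). lra. }
  pose proof PI_RGT_0 as HPI.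
  split; [|split].
  - intros Hbj. replace (j <=? b)%nat with false by (symmetry; apply Nat.leb_gt; lia).
    replace (b - j)%nat with 0%nat in Ht by lia. simpl in Ht. rewrite Rinv_1 in Ht.
    replace t with 0 by lra. replace ((0 + 0) * (PI / 2)) with 0 by ring. apply sin_0.
  - intros Hjb Hx. replace (j <=? b)%nat with true by (symmetry; apply Nat.leb_le; lia).
    rewrite Hx. simpl bit.
    replace ((1 + t) * (PI / 2)) with (PI / 2 + t * (PI / 2)) by ring.
    rewrite sin_plus, sin_PI2, cos_PI2.
    assert (cos (PI / 6) <= cos (t * (PI / 2))).
    { destruct (Req_dec (t * (PI / 2)) (PI / 6)) as [E|E]; [rewrite E; lra|].
      left. apply cos_decreasing_1; nra. }
    rewrite cos_PI6 in H.
    assert (4 / 3 <= sqrt 3).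
    { rewrite <- (sqrt_pow2 (4/3)) by lra. apply sqrt_le_1_alt. lra. }
    lra.
  - intros Hjb Hx. replace (j <=? b)%nat with true by (symmetry; apply Nat.leb_le; lia).
    rewrite Hx. simpl bit. rewrite <- sin_PI6.
    destruct (Req_dec ((0 + t) * (PI / 2)) (PI / 6)) as [E|E]; [rewrite E; lra|].
    left. apply sin_increasing_1; nra.
Qed.
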